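(* Let $C_T$ be the following class of four continuous maps of finite topological spaces: the constant map $\{a\leftrightarrow b\}\to\{*\}$; the constant map $\{a\searrow b\}\to\{*\}$; the inclusion $\{b\}\to\{a\searrow b\}$ of the closed point; and the constant map $\{a\swarrow o\searrow b\}\to\{*\}$. Then a Hausdorff topological space $K$ is compact iff the map $K\to\{*\}$ lies in $C_T^{lr}$.
   Context: For morphisms $f:A\to B$ and $g:X\to Y$ in a category, write $f\rightthreetimes g$ (''$f$ has the left lifting property with respect to $g$'') if for all morphisms $i:A\to X$, $j:B\to Y$ with $g\circ i=j\circ f$ there exists a morphism $h:B\to X$ with $h\circ f=i$ and $g\circ h=j$. For a class $C$ of morphisms, $C^l=\{f:\ f\rightthreetimes g\text{ for all }g\in C\}$, $C^r=\{g:\ f\rightthreetimes g\text{ for all }f\in C\}$, $C^{lr}=(C^l)^r$. Finite spaces: $\{*\}$ one point; $\{a\leftrightarrow b\}$ the antidiscrete two-point space; $\{a\searrow b\}$ the Sierpiński space with open sets $\emptyset,\{a\},\{a,b\}$; $\{a\swarrow o\searrow b\}$ the three-point space with points $a,o,b$ and open sets $\emptyset,\{o\},\{o,a\},\{o,b\},\{a,o,b\}$ (so $o$ is open and $a,b$ are closed points in the closure of $o$). *)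

(* Defs.v *)
From Stdlib Require Import List Classical.

Record Top := {
  carrier :> Type;
  is_open : (carrier -> Prop) -> Prop;
  open_ext : forall U V : carrier -> Prop,
      is_open U -> (forall x, U x <-> V x) -> is_open V;
  open_full : is_open (fun _ => True);
  open_inter : forall U V, is_open U -> is_open V -> is_open (fun x => U x /\ V x);
  open_union : forall S : (carrier -> Prop) -> Prop,
      (forall U, S U -> is_open U) -> is_open (fun x => exists U, S U /\ U x)
}.

Arguments is_open {t} _.

Lemma open_empty (X : Top) : is_open (fun _ : X => False).
Proof.
  apply (open_ext X (fun x => exists U, (fun _ : X -> Prop => False) U /\ U x)).
  - apply open_union. intros U [].
  - intros x; split; [intros [U [[] _]] | intros []].
Qed.

Lemma open_const (X : Top) (P : Prop) : is_open (fun _ : X => P).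
Proof.
  apply (open_ext X (fun x => exists U, (fun U : X -> Prop => P /\ forall y, U y) U /\ U x)).
  - apply open_union. intros U [_ HU]. apply (open_ext X (fun _ => True)).
    + apply open_full.
    + intros y; split; auto.
  - intros x; split.
    + intros [U [[HP _] _]]; exact HP.
    + intros HP. exists (fun _ => True). split; auto.
Qed.

Record cmap (A B : Top) := {
  fn :> A -> B;
  cont : forall U : B -> Prop, is_open U -> is_open (fun x => U (fn x))
}.

Arguments fn {A B} _ _.

Definition llp {A B X Y : Top} (f : cmap A B) (g : cmap X Y) : Prop :=
  forall (i : cmap A X) (j : cmap B Y),
    (forall a, g (i a) = j (f a)) ->
    exists h : cmap B X, (forall a, h (f a) = i a) /\ (forall b, g (h b) = j b).

Definition MorClass := forall A B : Top, cmap A B -> Prop.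

Definition lclass (C : MorClass) : MorClass :=
  fun A B f => forall X Y (g : cmap X Y), C X Y g -> llp f g.
Definition rclass (C : MorClass) : MorClass :=
  fun X Y g => forall A B (f : cmap A B), C A B f -> llp f g.
Definition lrclass (C : MorClass) : MorClass := rclass (lclass C).

Definition pt : Top.
Proof.
  refine {| carrier := unit; is_open := fun _ => True |}; auto.
Defined.

Inductive two := ta | tb.

Definition adisc : Top.
Proof.
  refine {| carrier := two;
            is_open := fun U => (forall x, U x) \/ (forall x, ~ U x) |}.
  - intros U V [H|H] E; [left|right]; intros x; firstorder.
  - left; auto.
  - intros U V [HU|HU] [HV|HV]; [left|right|right|right]; firstorder.
  - intros S HS. destruct (classic (exists U, S U /\ exists x, U x))
      as [[U [SU [x Ux]]]|N].
    + left. intros y. exists U. split; auto.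
      destruct (HS U SU) as [H|H]; [auto| exfalso; exact (H x Ux)].
    + right. intros y [U [SU Uy]]. apply N. eauto.
Defined.

(* {a ↘ b} : Sierpinski space, open sets ∅, {a}, {a,b} *)
Definition sierp : Top.
Proof.
  refine {| carrier := two; is_open := fun U => U tb -> U ta |}.
  - intros U V H E Hb. apply E, H, E, Hb.
  - auto.
  - intros U V HU HV [Ub Vb]; auto.
  - intros S HS [U [SU Ub]]. exists U. split; auto. apply (HS U SU Ub).
Defined.

(* {a ↙ o ↘ b} : open sets ∅, {o}, {o,a}, {o,b}, {a,o,b} *)
Inductive three := pa | po | pb.

Definition vspace : Top.
Proof.
  refine {| carrier := three; is_open := fun U => (U pa \/ U pb) -> U po |}.
  - intros U V H E Hab. apply E, H. destruct Hab as [h|h]; [left|right]; apply E, h.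
  - auto.
  - intros U V HU HV [[Ua Va]|[Ub Vb]]; auto.
  - intros S HS [[U [SU Ua]]|[U [SU Ub]]]; exists U; split; auto; apply (HS U SU); auto.
Defined.

Definition to_pt (X : Top) : cmap X pt.
Proof. refine {| fn := (fun _ => tt : carrier pt) |}. intros U _. apply open_const. Defined.

Definition incl_b : cmap pt sierp.
Proof. refine {| fn := (fun _ => tb : carrier sierp) |}. intros U _. exact I. Defined.

Inductive C_T : MorClass :=
| CT_adisc : C_T adisc pt (to_pt adisc)
| CT_sierp : C_T sierp pt (to_pt sierp)
| CT_incl  : C_T pt sierp incl_b
| CT_vspace : C_T vspace pt (to_pt vspace).

Definition hausdorff (X : Top) : Prop :=
  forall x y : X, x <> y ->
    exists U V : X -> Prop, is_open U /\ is_open V /\ U x /\ V y /\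
      (forall z, U z -> V z -> False).

Definition compact (X : Top) : Prop :=
  forall S : (X -> Prop) -> Prop,
    (forall U, S U -> is_open U) ->
    (forall x, exists U, S U /\ U x) ->
    exists l : list (X -> Prop),
      (forall U, In U l -> S U) /\ (forall x, exists U, In U l /\ U x).

(* Main.v *)
Require Import Defs.
From Stdlib Require Import List.
From Stdlib Require Import Classical ClassicalEpsilon.

Module UFM.
From mathcomp Require Import all_boot.
From mathcomp Require Import classical_sets filter.

Lemma my_ultra (T : Type) (P : (T -> Prop) -> Prop) :
  P (fun _ => True) ->
  (forall A B, P A -> P B -> P (fun x => A x /\ B x)) ->
  (forall A B : T -> Prop, (forall x, A x -> B x) -> P A -> P B) ->
  ~ P (fun _ => False) ->
  exists G : (T -> Prop) -> Prop,
    (forall A, P A -> G A) /\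
    (forall A B, G A -> G B -> G (fun x => A x /\ B x)) /\
    (forall A B : T -> Prop, (forall x, A x -> B x) -> G A -> G B) /\
    ~ G (fun _ => False) /\
    (forall A, G A \/ G (fun x => ~ A x)).
Proof.
move=> PT PI PS P0.
have PF : ProperFilter (P : set_system T).
  split; first exact: P0.
  split; first exact: PT.
  - by move=> A B; apply: PI.
  - by move=> A B; apply: PS.
have [G [UG sPG]] := ultraFilterLemma PF.
exists G; split; first exact: sPG.
have GF : ProperFilter G by exact: ultra_proper.
split; first by move=> A B GA GB; exact: (filterI GA GB).
split; first by move=> A B AB GA; exact: (filterS AB GA).
split; first exact: (filter_not_empty G).
by move=> A; exact: (in_ultra_setVsetC A UG).
Qed.
End UFM.


Definition emi := excluded_middle_informative.

Lemma open_local (X : Top) (W : X -> Prop) :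
  (forall x, W x -> exists U, is_open U /\ U x /\ forall y, U y -> W y) -> is_open W.
Proof.
  intros H.
  apply (open_ext X (fun x => exists U, (fun U => is_open U /\ forall y, U y -> W y) U /\ U x)).
  - apply open_union. intros U [HU _]; exact HU.
  - intros x; split.
    + intros [U [[_ HU] Ux]]; auto.
    + intros Wx. destruct (H x Wx) as [U [HU [Ux HUW]]]. exists U; auto.
Qed.

Lemma open_full' (X : Top) (W : X -> Prop) : (forall x, W x) -> is_open W.
Proof. intros H. apply (open_ext X (fun _ => True)); [apply open_full | firstorder]. Qed.

Lemma open_empty' (X : Top) (W : X -> Prop) : (forall x, ~ W x) -> is_open W.
Proof. intros H. apply (open_ext X (fun _ => False)); [apply open_empty | firstorder]. Qed.

Lemma regular (K : Top) (HK : hausdorff K) (Hc : compact K) (k : K) (W : K -> Prop) :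
  is_open W -> W k -> exists W', is_open W' /\ W' k /\
    forall z, (forall U, is_open U -> U z -> exists y, U y /\ W' y) -> W z.
Proof.
  intros HW Wk.
  set (S := fun U : K -> Prop => U = W \/ (is_open U /\ exists V, is_open V /\ V k /\
             forall x, U x -> V x -> False)).
  destruct (Hc S) as [l [Hl Hcl]].
  - intros U [->|[HU _]]; auto.
  - intros x. destruct (classic (W x)) as [Wx|nWx].
    + exists W; split; [left; reflexivity | exact Wx].
    + assert (x <> k) as Hxk by (intros ->; contradiction).
      destruct (HK x k Hxk) as [U [V [HU [HV [Ux [Vk Hd]]]]]].
      exists U; split; auto. right. split; auto. exists V; auto.
  - assert (Hind : forall l, (forall U, In U l -> S U) -> exists W', is_open W' /\ W' k /\
              forall U, In U l -> U = W \/ forall x, U x -> W' x -> False).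
    { intros l0; induction l0 as [|U0 l0 IH]; intros Hl0.
      - exists (fun _ => True). split; [apply open_full|]. split; [exact I|]. intros ? [].
      - destruct IH as [W' [HW' [W'k HW'l]]]. { intros; apply Hl0; right; auto. }
        destruct (Hl0 U0 (or_introl eq_refl)) as [->|[HU [V [HV [Vk Hd]]]]].
        + exists W'. split; auto. split; auto. intros U' [<-|HU']; auto.
        + exists (fun x => W' x /\ V x). split; [apply open_inter; auto|].
          split; auto. intros U' [<-|HU'].
          * right. intros x Ux [_ Vx]. exact (Hd x Ux Vx).
          * destruct (HW'l U' HU') as [E|E]; auto. right. intros x Ux [Wx _]. eauto. }
    destruct (Hind l Hl) as [W' [HW' [W'k HW'l]]].
    exists W'. split; auto. split; auto.
    intros z Hz. destruct (Hcl z) as [U [Ul Uz]].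
    destruct (HW'l U Ul) as [->|Hd]; auto.
    assert (HU : is_open U) by (destruct (Hl U Ul) as [->|[HU _]]; auto).
    destruct (Hz U HU Uz) as [y [Uy W'y]]. destruct (Hd y Uy W'y).
Qed.

Lemma lcl_dense A B (f : cmap A B) : lclass C_T A B f ->
  forall V : B -> Prop, is_open V -> forall b, V b -> exists a, V (f a).
Proof.
  intros Hf V HV b Vb. apply NNPP. intros Hn.
  assert (Hj : forall U : sierp -> Prop, is_open U ->
     is_open (fun x => U ((fun x => if emi (V x) then ta else tb : carrier sierp) x))).
  { intros U HU. simpl in HU. destruct (classic (U tb)) as [Ub|nUb].
    - apply open_full'. intros x. destruct (emi (V x)); auto.
    - destruct (classic (U ta)) as [Ua|nUa].
      + apply (open_ext _ V _ HV). intros x. destruct (emi (V x)); split; intros; tauto.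
      + apply open_empty'. intros x. destruct (emi (V x)); auto. }
  set (j := {| fn := _ ; cont := Hj |} : cmap B sierp).
  destruct (Hf pt sierp incl_b CT_incl (to_pt A) j) as [h [_ Hh]].
  - intros a. simpl. destruct (emi (V (f a))); auto. exfalso; eauto.
  - specialize (Hh b). simpl in Hh. destruct (emi (V b)); [discriminate | contradiction].
Qed.

Lemma lcl_ext A B (f : cmap A B) : lclass C_T A B f ->
  forall O1 O2 : A -> Prop, is_open O1 -> is_open O2 -> (forall a, O1 a \/ O2 a) ->
  exists P1 P2 : B -> Prop, is_open P1 /\ is_open P2 /\ (forall b, P1 b \/ P2 b) /\
    (forall a, P1 (f a) -> O1 a) /\ (forall a, P2 (f a) -> O2 a).
Proof.
  intros Hf O1 O2 H1 H2 Hcov.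
  set (ifn := fun a => (if emi (O1 a) then (if emi (O2 a) then po else pa) else pb) : carrier vspace).
  assert (Hi : forall U : vspace -> Prop, is_open U -> is_open (fun x => U (ifn x))).
  { intros U HU. simpl in HU. unfold ifn.
    destruct (classic (U po)) as [Uo|nUo].
    - destruct (classic (U pa)) as [Ua|nUa]; destruct (classic (U pb)) as [Ub|nUb].
      + apply open_full'. intros x. destruct (emi (O1 x)); [destruct (emi (O2 x))|]; auto.
      + apply (open_ext _ O1 _ H1). intros x.
        destruct (emi (O1 x)); [destruct (emi (O2 x))|]; tauto.
      + apply (open_ext _ O2 _ H2). intros x. specialize (Hcov x).
        destruct (emi (O1 x)); [destruct (emi (O2 x))|]; tauto.
      + apply (open_ext _ _ _ (open_inter _ O1 O2 H1 H2)). intros x.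
        destruct (emi (O1 x)); [destruct (emi (O2 x))|]; tauto.
    - apply open_empty'. intros x.
      destruct (emi (O1 x)); [destruct (emi (O2 x))|]; tauto. }
  set (i := {| fn := ifn ; cont := Hi |} : cmap A vspace).
  destruct (Hf vspace pt (to_pt vspace) CT_vspace i (to_pt B)) as [h [Hh _]].
  { intros; reflexivity. }
  exists (fun b => h b <> pb), (fun b => h b <> pa).
  split; [apply (cont _ _ h (fun t => t <> pb)); simpl; intros _; discriminate|].
  split; [apply (cont _ _ h (fun t => t <> pa)); simpl; intros _; discriminate|].
  split. { intros b. simpl. destruct (fn h b); first [left; intros E; discriminate E | right; intros E; discriminate E]. }
  split.
  - intros a. rewrite Hh. simpl. unfold ifn.
    destruct (emi (O1 a)); [auto| tauto].
  - intros a. rewrite Hh. simpl. unfold ifn. specialize (Hcov a).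
    destruct (emi (O1 a)); [destruct (emi (O2 a))|]; tauto.
Qed.

Lemma compact_lift (K : Top) (HK : hausdorff K) (Hc : compact K)
  A B (f : cmap A B) (Hf : lclass C_T A B f) (i : cmap A K) :
  exists h : cmap B K, forall a, h (f a) = i a.
Proof.
  pose proof (lcl_dense A B f Hf) as Hd.
  pose proof (lcl_ext A B f Hf) as He.
  set (cl := fun b k => forall V, is_open V -> V b -> forall U : K -> Prop, is_open U -> U k ->
        exists a, V (f a) /\ U (i a)).
  assert (Hex : forall b, exists k, cl b k).
  { intros b. apply NNPP. intros Hn.
    set (S := fun U : K -> Prop => is_open U /\ exists V, is_open V /\ V b /\
                 forall a, V (f a) -> U (i a) -> False).
    destruct (Hc S) as [l [Hl Hcl]].
    - intros U [HU _]; auto.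
    - intros k. apply NNPP. intros Hk. apply Hn. exists k.
      intros V HV Vb U HU Uk. apply NNPP. intros Hva. apply Hk.
      exists U. split; auto. split; auto. exists V. split; auto. split; auto.
      intros a Va Ua. apply Hva. eauto.
    - assert (Hind : forall l, (forall U, In U l -> S U) -> exists V, is_open V /\ V b /\
              forall U, In U l -> forall a, V (f a) -> U (i a) -> False).
      { intros l0; induction l0 as [|U0 l0 IH]; intros Hl0.
        - exists (fun _ => True). split; [apply open_full|]. split; [exact I|]. intros ? [].
        - destruct IH as [V [HV [Vb HVl]]]. { intros; apply Hl0; right; auto. }
          destruct (Hl0 U0 (or_introl eq_refl)) as [_ [V' [HV' [V'b Hd']]]].
          exists (fun x => V x /\ V' x). split; [apply open_inter; auto|].
          split; auto. intros U' [<-|HU'] a [Va V'a] Ua; eauto. }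
      destruct (Hind l Hl) as [V [HV [Vb HVl]]].
      destruct (Hd V HV b Vb) as [a Va].
      destruct (Hcl (i a)) as [U [Ul Ua]]. eauto. }
  assert (Hkey : forall b k W, cl b k -> is_open W -> W k ->
            exists P, is_open P /\ P b /\ forall a, P (f a) -> W (i a)).
  { intros b k W Hcl HW Wk.
    destruct (regular K HK Hc k W HW Wk) as [W' [HW' [W'k HW'W]]].
    set (C := fun z => exists U, (fun U : K -> Prop => is_open U /\ forall y, U y -> W' y -> False) U /\ U z).
    assert (HC : is_open C). { apply open_union. intros U [HU _]; auto. }
    destruct (He (fun a => W (i a)) (fun a => C (i a)) (cont _ _ i W HW) (cont _ _ i C HC))
      as [P1 [P2 [HP1 [HP2 [Hcov [H1 H2]]]]]].
    - intros a. destruct (classic (W (i a))) as [Wa|nWa]; [left; auto|right].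
      apply NNPP. intros nC. apply nWa. apply HW'W. intros U HU Ua.
      apply NNPP. intros Hn. apply nC. exists U. split; auto. split; auto.
      intros y Uy W'y. apply Hn. eauto.
    - exists P1. split; auto. split; auto.
      destruct (Hcov b) as [P1b|P2b]; auto.
      destruct (Hcl P2 HP2 P2b W' HW' W'k) as [a [P2a W'a]].
      destruct (H2 a P2a) as [U [[_ HUd] Ua]]. destruct (HUd _ Ua W'a). }
  assert (Huniq : forall b k1 k2, cl b k1 -> cl b k2 -> k1 = k2).
  { intros b k1 k2 H1 H2. apply NNPP. intros Hne.
    destruct (HK k1 k2 Hne) as [U1 [U2 [HU1 [HU2 [U1k [U2k Hdis]]]]]].
    destruct (Hkey b k1 U1 H1 HU1 U1k) as [P [HP [Pb HPU]]].
    destruct (H2 P HP Pb U2 HU2 U2k) as [a [Pa U2a]]. eauto. }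
  set (hf := fun b => proj1_sig (constructive_indefinite_description _ (Hex b))).
  assert (Hhf : forall b, cl b (hf b)).
  { intros b. unfold hf. destruct (constructive_indefinite_description _ (Hex b)); auto. }
  assert (Hcont : forall W : K -> Prop, is_open W -> is_open (fun b => W (hf b))).
  { intros W HW. apply open_local. intros b Wb.
    destruct (regular K HK Hc (hf b) W HW Wb) as [W' [HW' [W'k HW'W]]].
    destruct (Hkey b (hf b) W' (Hhf b) HW' W'k) as [P [HP [Pb HPW]]].
    exists P. split; auto. split; auto. intros b' Pb'. apply HW'W.
    intros U HU Ub'. destruct (Hhf b' P HP Pb' U HU Ub') as [a [Pa Ua]].
    exists (i a). auto. }
  exists {| fn := hf; cont := Hcont |}. intros a. simpl.
  apply Huniq with (f a); auto.
  intros V HV Va U HU Ua. exists a; auto.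
Qed.


Section Part2.
Variable K : Top.
Variable G : (K -> Prop) -> Prop.
Hypothesis GT : G (fun _ => True).
Hypothesis GI : forall A B, G A -> G B -> G (fun x => A x /\ B x).
Hypothesis GS : forall A B : K -> Prop, (forall x, A x -> B x) -> G A -> G B.
Hypothesis G0 : ~ G (fun _ => False).
Hypothesis GU : forall A, G A \/ G (fun x => ~ A x).

Definition Bopen (U : option K -> Prop) : Prop :=
  is_open (fun x => U (Some x)) /\ (U None -> G (fun x => U (Some x))).

Definition Bsp : Top.
Proof.
  refine {| carrier := option K; is_open := Bopen |}.
  - intros U V [H1 H2] E. split.
    + apply (open_ext _ _ _ H1). intros x; apply E.
    + intros VN. apply (GS (fun x => U (Some x))). { intros x; apply E. }
      apply H2, E, VN.
  - split; [apply open_full | auto].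
  - intros U V [HU1 HU2] [HV1 HV2]. split.
    + apply (open_inter _ _ _ HU1 HV1).
    + intros [UN VN]. apply GI; auto.
  - intros S HS. split.
    + apply (open_ext _ (fun y => exists V, (fun V : K -> Prop => exists U, S U /\ forall y, V y <-> U (Some y)) V /\ V y)).
      * apply open_union. intros V [U [SU E]].
        apply (open_ext _ _ _ (proj1 (HS U SU))). intros y. symmetry; apply E.
      * intros y. split.
        -- intros [V [[U [SU E]] Vy]]. exists U. split; auto. apply E; auto.
        -- intros [U [SU Uy]]. exists (fun y => U (Some y)). split; auto.
           exists U. split; auto. intros; reflexivity.
    + intros [U [SU UN]]. apply (GS (fun x => U (Some x))).
      * intros x Ux. exists U; auto.
      * apply (proj2 (HS U SU)); auto.
Defined.

Definition fS : cmap K Bsp.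
Proof. refine {| fn := (fun x => Some x : carrier Bsp) |}. intros U [HU _]. exact HU. Defined.

Lemma fS_lcl : lclass C_T K Bsp fS.
Proof.
  intros X Y g HC. destruct HC.
  - intros i j Hsq.
    assert (Hh : forall U : adisc -> Prop, is_open U -> is_open
       (fun o : carrier Bsp => U ((fun o : option K => match o with Some a => i a | None => ta end : carrier adisc) o))).
    { intros U [HU|HU].
      - apply open_full'. intros [a|]; apply HU.
      - apply open_empty'. intros [a|]; apply HU. }
    exists {| fn := _; cont := Hh |}. split; [intros; reflexivity|].
    intros b; simpl. destruct (fn j b); reflexivity.
  - intros i j Hsq.
    assert (Hh : forall U : sierp -> Prop, is_open U -> is_open
       (fun o : carrier Bsp => U ((fun o : option K => match o with Some a => i a | None => tb end : carrier sierp) o))).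
    { intros U HU. simpl in HU. destruct (classic (U tb)) as [Ub|nUb].
      - apply open_full'. intros [a|]; [destruct (fn i a)|]; auto.
      - split.
        + apply (cont _ _ i U). exact HU.
        + intros H; contradiction. }
    exists {| fn := _; cont := Hh |}. split; [intros; reflexivity|].
    intros b; simpl. destruct (fn j b); reflexivity.
  - intros i j Hsq. exists (to_pt Bsp). split.
    + intros a. simpl. destruct (fn i a); reflexivity.
    + intros [a|].
      * simpl. specialize (Hsq a). simpl in Hsq. exact Hsq.
      * simpl. destruct (fn j None) eqn:E; [|reflexivity]. exfalso.
        destruct (cont _ _ j (fun t => t = ta)) as [_ H2].
        { simpl. intros Hb; discriminate. }
        apply G0. apply (GS _ _ (fun x (H : fn j (Some x) = ta) =>
             ltac:(specialize (Hsq x); simpl in Hsq; rewrite H in Hsq; discriminate)) (H2 E)).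
  - intros i j Hsq.
    set (hN := (if emi (G (fun a => fn i a <> pb)) then pa else pb) : carrier vspace).
    assert (Hh : forall U : vspace -> Prop, is_open U -> is_open
       (fun o : carrier Bsp => U ((fun o : option K => match o with Some a => i a | None => hN end : carrier vspace) o))).
    { intros U HU. split.
      - apply (cont _ _ i U HU).
      - simpl. unfold hN. destruct (emi (G (fun a => fn i a <> pb))) as [Hg|Hg]; intros HUN.
        + apply (GS (fun a => fn i a <> pb)); [|exact Hg].
          intros x H. simpl in HU |- *. destruct (fn i x); auto; contradiction.
        + destruct (GU (fun a => fn i a <> pb)) as [Hg'|Hg']; [contradiction|].
          apply (GS (fun x => ~ fn i x <> pb)); [|exact Hg'].
          intros x H. simpl in HU |- *. destruct (fn i x); auto; exfalso; apply H; intros E; discriminate E. }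
    exists {| fn := _; cont := Hh |}. split; [intros; reflexivity|].
    intros b; simpl. destruct (fn j b); reflexivity.
Qed.
End Part2.

Theorem claim1 (K : Top) (HK : hausdorff K) :
  compact K <-> lrclass C_T K pt (to_pt K).
Proof.
  split.
  - intros Hc A B f Hf i j Hsq.
    destruct (compact_lift K HK Hc A B f Hf i) as [h Hh].
    exists h. split; auto. intros b. simpl. destruct (fn j b). reflexivity.
  - intros Hlr S HS Hcov. apply NNPP. intros Hnf.
    set (P := fun X : K -> Prop => exists l, (forall U, In U l -> S U) /\
                 forall x, (forall U, In U l -> ~ U x) -> X x).
    destruct (UFM.my_ultra K P) as [G [HPG [GI [GS [G0 GU]]]]].
    + exists nil. split; [intros U []|auto].
    + intros X Y [l1 [H1 H1']] [l2 [H2 H2']]. exists (l1 ++ l2). split.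
      * intros U HU. apply in_app_or in HU as [HU|HU]; auto.
      * intros x Hx. split; [apply H1'|apply H2']; intros U HU; apply Hx; apply in_or_app; auto.
    + intros X Y HXY [l [H1 H2]]. exists l; auto.
    + intros [l [H1 H2]]. apply Hnf. exists l. split; auto. intros x.
      apply NNPP. intros Hn. apply (H2 x). intros U HU Ux. apply Hn. eauto.
    + assert (GT : G (fun _ => True)).
      { apply HPG. exists nil. split; [intros U []|auto]. }
      set (idK := {| fn := (fun x : K => x); cont := (fun U (H : is_open U) => H) |} : cmap K K).
      destruct (Hlr _ _ _ (fS_lcl K G GT GI GS G0 GU) idK (to_pt _)) as [h [Hh _]].
      { intros; reflexivity. }
      destruct (Hcov (h None)) as [U0 [SU0 U0k]].
      destruct (cont _ _ h U0 (HS U0 SU0)) as [_ H2].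
      specialize (H2 U0k).
      apply G0. apply (GS (fun x => U0 x /\ ~ U0 x)); [intros x [a b]; auto|].
      apply GI.
      * apply (GS (fun x => U0 (fn h (Some x)))); [|exact H2].
        intros x H. simpl in Hh. specialize (Hh x). simpl in H. rewrite Hh in H. exact H.
      * apply HPG. exists (U0 :: nil). split.
        -- intros U [<-|[]]; auto.
        -- intros x Hx. apply Hx. left; reflexivity.
Qed.
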